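(* Let $\phi,\psi:\mathbb R_+\to\mathbb R_+$ be continuous strictly increasing functions with $\phi(0)=\psi(0)=0$ and $\lim_{t\to\infty}\phi(t)=\lim_{t\to\infty}\psi(t)=\infty$, and let $H^\psi$ denote the Hausdorff measure with determining function $\psi$. For every measurable $f:[0,1]\to\mathbb R$, $$H^\psi\Big(x\in[0,1]:\limsup_{h\to0^+}\frac{|f(x+h)-f(x)|}{\phi(h)}>1\Big)\le\mathcal V^*_{\psi\circ\phi^{-1}}(f).$$
   Context: For a function $\Phi$ and a partition $\pi=\{0=t_0<\dots<t_n=1\}$, $v_\Phi(f,\pi)=\sum_{i=1}^n\Phi(|f(t_i)-f(t_{i-1})|)$, $|\pi|=\max_i(t_i-t_{i-1})$, $\Pi_\delta$ is the set of partitions with $|\pi|\le\delta$, and the limiting $\Phi$-variation is $\mathcal V^*_\Phi(f)=\lim_{\delta\to0}\sup\{v_\Phi(f,\pi):\pi\in\Pi_\delta\}$. In the limsup only $h>0$ with $x+h\le1$ are considered. When $\psi$ is the identity, $H^\psi$ is Lebesgue measure. *)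

(* Defs.v *)
From Stdlib Require Import Reals Lra.
Open Scope R_scope.

Definition cont_nonneg (g : R -> R) : Prop :=
  forall t, 0 <= t -> forall eps, 0 < eps -> exists del, 0 < del /\
    forall s, 0 <= s -> Rabs (s - t) < del -> Rabs (g s - g t) < eps.

Definition admissible (g : R -> R) : Prop :=
  cont_nonneg g /\
  (forall s t, 0 <= s -> s < t -> g s < g t) /\
  g 0 = 0 /\
  (forall M, exists T, forall t, T <= t -> M <= g t).

(* "H^psi(E) <= c" for the Hausdorff (outer) measure with determining
   function psi:  H^psi(E) = lim_{delta->0} inf { sum_n psi(diam U_n) :
   E subset U_n U_n, diam U_n <= delta }.  A cover is given by sets U n
   together with bounds d n >= diam (U n); since psi is increasing the
   infimum is the same as with d n = diam (U n).  The series of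
   nonnegative terms is bounded via its partial sums (value in [0,+oo]). *)
Definition H_le (psi : R -> R) (E : R -> Prop) (c : R) : Prop :=
  forall delta eps, 0 < delta -> 0 < eps ->
    exists (U : nat -> R -> Prop) (d : nat -> R),
      (forall n, 0 <= d n <= delta) /\
      (forall n x y, U n x -> U n y -> Rabs (x - y) <= d n) /\
      (forall x, E x -> exists n, U n x) /\
      (forall N, sum_f_R0 (fun n => psi (d n)) N <= c + eps).

Definition leb_outer_le (E : R -> Prop) (c : R) : Prop := H_le (fun r => r) E c.

Definition leb_measurable (E : R -> Prop) : Prop :=
  forall (A : R -> Prop) c, leb_outer_le A c ->
    exists a b, leb_outer_le (fun x => A x /\ E x) a /\
                leb_outer_le (fun x => A x /\ ~ E x) b /\ a + b <= c.

Definition measurable_on01 (f : R -> R) : Prop :=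
  forall a, leb_measurable (fun x => 0 <= x <= 1 /\ a < f x).

Definition is_partition (n : nat) (t : nat -> R) : Prop :=
  (0 < n)%nat /\ t 0%nat = 0 /\ t n = 1 /\
  (forall i, (i < n)%nat -> t i < t (S i)).

Definition mesh_le (n : nat) (t : nat -> R) (delta : R) : Prop :=
  forall i, (i < n)%nat -> t (S i) - t i <= delta.

Fixpoint fsum (g : nat -> R) (n : nat) : R :=
  match n with O => 0 | S k => fsum g k + g k end.

Definition v_Phi (Phi f : R -> R) (n : nat) (t : nat -> R) : R :=
  fsum (fun i => Phi (Rabs (f (t (S i)) - f (t i)))) n.

(* "V*_Phi(f) <= c" where V*_Phi(f) = lim_{delta->0} sup_{pi in Pi_delta} v_Phi(f,pi)
   (the sup is nonincreasing as delta decreases, so the limit is the inf). *)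
Definition Vstar_le (Phi f : R -> R) (c : R) : Prop :=
  forall eps, 0 < eps -> exists delta, 0 < delta /\
    forall n t, is_partition n t -> mesh_le n t delta ->
      v_Phi Phi f n t <= c + eps.

Definition limsup_gt1 (phi f : R -> R) (x : R) : Prop :=
  exists c, 1 < c /\ forall eta, 0 < eta ->
    exists h, 0 < h < eta /\ x + h <= 1 /\
      c < Rabs (f (x + h) - f x) / phi h.

(* Main.v *)
Require Import Defs.
From Stdlib Require Import Reals Lra Lia List Arith ZArith Classical ClassicalEpsilon.
Open Scope R_scope.

Definition part (lo hi : R) (n : nat) (t : nat -> R) : Prop :=
  t 0%nat = lo /\ t n = hi /\ (forall i, (i < n)%nat -> t i < t (S i)).

Lemma fsum_split (g : nat -> R) n1 n2 :
  fsum g (n1 + n2) = fsum g n1 + fsum (fun i => g (n1 + i)%nat) n2.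
Proof.
  induction n2 as [|n2 IH]; simpl.
  - rewrite Nat.add_0_r; lra.
  - rewrite Nat.add_succ_r; simpl; rewrite IH; lra.
Qed.

Lemma fsum_ext (g h : nat -> R) n :
  (forall i, (i < n)%nat -> g i = h i) -> fsum g n = fsum h n.
Proof.
  induction n as [|n IH]; intros H; simpl; auto.
  rewrite IH by (intros; apply H; lia). rewrite H by lia. reflexivity.
Qed.

Lemma fsum_nonneg (g : nat -> R) n :
  (forall i, (i < n)%nat -> 0 <= g i) -> 0 <= fsum g n.
Proof.
  induction n as [|n IH]; intros H; simpl; [lra|].
  assert (0 <= g n) by (apply H; lia).
  assert (0 <= fsum g n) by (apply IH; intros; apply H; lia). lra.
Qed.

Section Parts.
Variable Phi f : R -> R.
Variable delta : R.
Hypothesis Phi_nonneg : forall y, 0 <= y -> 0 <= Phi y.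
Hypothesis delta_pos : 0 < delta.

Lemma v_nonneg n t : 0 <= v_Phi Phi f n t.
Proof.
  unfold v_Phi. apply fsum_nonneg. intros; apply Phi_nonneg, Rabs_pos.
Qed.

Lemma part_concat lo mid hi n1 t1 n2 t2 :
  part lo mid n1 t1 -> part mid hi n2 t2 ->
  mesh_le n1 t1 delta -> mesh_le n2 t2 delta ->
  let t := fun i => if (i <=? n1)%nat then t1 i else t2 (i - n1)%nat in
  part lo hi (n1 + n2) t /\ mesh_le (n1 + n2) t delta /\
  v_Phi Phi f (n1 + n2) t = v_Phi Phi f n1 t1 + v_Phi Phi f n2 t2.
Proof.
  intros [A1 [B1 C1]] [A2 [B2 C2]] M1 M2 t.
  assert (T1 : forall i, (i <= n1)%nat -> t i = t1 i).
  { intros i Hi; unfold t; apply Nat.leb_le in Hi; rewrite Hi; auto. }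
  assert (T2 : forall j, t (n1 + j)%nat = t2 j).
  { intros j; unfold t. destruct j as [|j].
    - rewrite Nat.add_0_r, Nat.leb_refl, B1, A2; auto.
    - assert (E : (n1 + S j <=? n1)%nat = false) by (apply Nat.leb_gt; lia).
      rewrite E; f_equal; lia. }
  repeat split.
  - rewrite T1 by lia; auto.
  - rewrite T2; auto.
  - intros i Hi. destruct (le_lt_dec n1 i) as [H|H].
    + replace i with (n1 + (i - n1))%nat by lia.
      replace (S (n1 + (i - n1))) with (n1 + S (i - n1))%nat by lia.
      rewrite !T2. apply C2; lia.
    + rewrite !T1 by lia. apply C1; lia.
  - intros i Hi. destruct (le_lt_dec n1 i) as [H|H].
    + replace i with (n1 + (i - n1))%nat by lia.
      replace (S (n1 + (i - n1))) with (n1 + S (i - n1))%nat by lia.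
      rewrite !T2. apply M2; lia.
    + rewrite !T1 by lia. apply M1; lia.
  - unfold v_Phi. rewrite fsum_split. f_equal.
    + apply fsum_ext; intros i Hi. rewrite !T1 by lia. reflexivity.
    + apply fsum_ext; intros i Hi.
      replace (S (n1 + i)) with (n1 + S i)%nat by lia. rewrite !T2. reflexivity.
Qed.

Lemma part_concat_ex lo mid hi n1 t1 n2 t2 :
  part lo mid n1 t1 -> part mid hi n2 t2 ->
  mesh_le n1 t1 delta -> mesh_le n2 t2 delta ->
  exists n t, part lo hi n t /\ mesh_le n t delta /\
  v_Phi Phi f n t = v_Phi Phi f n1 t1 + v_Phi Phi f n2 t2.
Proof.
  intros. eexists; eexists. apply (part_concat lo mid hi n1 t1 n2 t2); eauto.
Qed.

Lemma part_uniform lo hi : lo <= hi -> exists n t, part lo hi n t /\ mesh_le n t delta.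
Proof.
  intros Hle. destruct (Req_dec lo hi) as [E|E].
  - exists 0%nat, (fun _ => lo). split; [|intros i Hi; lia].
    repeat split; auto. intros; lia.
  - destruct (archimed ((hi - lo) / delta)) as [Hup _].
    set (m := up ((hi - lo) / delta)) in *.
    assert (Hm : 0 < IZR m).
    { assert (0 < (hi - lo) / delta) by (apply Rdiv_lt_0_compat; lra). lra. }
    assert (Hm0 : (0 < m)%Z) by (apply lt_IZR; auto).
    set (n := Z.to_nat m).
    assert (Hn : INR n = IZR m) by (unfold n; rewrite INR_IZR_INZ, Z2Nat.id; auto; lia).
    assert (Hnp : 0 < INR n) by lra.
    exists n, (fun i => lo + INR i * ((hi - lo) / INR n)).
    split.
    + repeat split.
      * simpl; lra.
      * field_simplify; [lra|lra].
      * intros i Hi. rewrite S_INR.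
        assert (0 < (hi - lo) / INR n) by (apply Rdiv_lt_0_compat; lra). nra.
    + intros i Hi. rewrite S_INR.
      replace (lo + (INR i + 1) * ((hi - lo) / INR n) - (lo + INR i * ((hi - lo) / INR n)))
        with ((hi - lo) / INR n) by ring.
      apply Rmult_le_reg_r with (INR n); auto.
      unfold Rdiv. rewrite Rmult_assoc, Rinv_l by lra.
      rewrite Hn.
      assert ((hi - lo) / delta * delta = hi - lo) by (field; lra).
      nra.
Qed.

Lemma part_single a l : 0 < l -> l <= delta ->
  exists n t, part a (a + l) n t /\ mesh_le n t delta /\
   v_Phi Phi f n t = Phi (Rabs (f (a + l) - f a)).
Proof.
  intros Hl Hd. exists 1%nat, (fun i => match i with 0%nat => a | _ => a + l end).
  repeat split.
  - intros i Hi. assert (i = 0%nat) by lia. subst. lra.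
  - intros i Hi. assert (i = 0%nat) by lia. subst. lra.
  - unfold v_Phi. simpl. lra.
Qed.

End Parts.

Definition disj (x h a l : R) : Prop := x + h < a \/ a + l < x.
Definition disjp (p q : R * R) : Prop := disj (fst p) (snd p) (fst q) (snd q).

Fixpoint pdisj (L : list (R * R)) : Prop :=
  match L with nil => True | p :: L' => Forall (disjp p) L' /\ pdisj L' end.

Fixpoint lsum (g : R * R -> R) (L : list (R * R)) : R :=
  match L with nil => 0 | p :: L' => g p + lsum g L' end.

Lemma pdisj_filter P L : pdisj L -> pdisj (filter P L).
Proof.
  induction L as [|p L IH]; simpl; auto.
  intros [H1 H2]. destruct (P p); simpl; auto.
  split; auto. rewrite Forall_forall in *. intros q Hq.
  apply filter_In in Hq. apply H1; tauto.
Qed.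

Lemma lsum_filter g P L : lsum g L = lsum g (filter P L) + lsum g (filter (fun q => negb (P q)) L).
Proof.
  induction L as [|p L IH]; simpl; [lra|].
  destruct (P p); simpl; rewrite IH; lra.
Qed.

Lemma lsum_le g h L : Forall (fun p => g p <= h p) L -> lsum g L <= lsum h L.
Proof.
  induction L as [|p L IH]; simpl; [lra|]. intros H; inversion H; subst.
  specialize (IH H3). lra.
Qed.

Definition inside (delta lo hi : R) (p : R * R) : Prop :=
  lo <= fst p /\ 0 < snd p /\ snd p <= delta /\ fst p + snd p <= hi.

Definition ltb_R (x y : R) : bool := if Rlt_dec x y then true else false.

Section PL.
Variable Phi f : R -> R.
Variable delta : R.
Hypothesis Phi_nonneg : forall y, 0 <= y -> 0 <= Phi y.
Hypothesis delta_pos : 0 < delta.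

Definition gPhi (p : R * R) : R := Phi (Rabs (f (fst p + snd p) - f (fst p))).

Lemma part_list_aux : forall m L lo hi, (length L <= m)%nat -> lo <= hi ->
  Forall (inside delta lo hi) L -> pdisj L ->
  exists n t, part lo hi n t /\ mesh_le n t delta /\ lsum gPhi L <= v_Phi Phi f n t.
Proof.
  induction m as [|m IH]; intros L lo hi Hlen Hle HF HD.
  - destruct L; simpl in Hlen; [|lia].
    destruct (part_uniform delta delta_pos lo hi Hle) as [n [t [P M]]].
    exists n, t; split; [auto|split; [auto|]]. simpl. apply v_nonneg; auto.
  - destruct L as [|[a l] L].
    + destruct (part_uniform delta delta_pos lo hi Hle) as [n [t [P M]]].
      exists n, t; split; [auto|split; [auto|]]. simpl. apply v_nonneg; auto.
    + simpl in Hlen, HD. destruct HD as [HD1 HD2].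
      inversion HF as [|? ? Hin HF']; subst.
      destruct Hin as [Ha [Hl1 [Hl2 Hal]]]; simpl in *.
      set (P := fun q : R * R => ltb_R (fst q) a).
      assert (HL : Forall (inside delta lo a) (filter P L)).
      { rewrite Forall_forall in *. intros q Hq. apply filter_In in Hq.
        destruct Hq as [Hq Pq]. specialize (HF' q Hq). specialize (HD1 q Hq).
        unfold P, ltb_R in Pq. destruct (Rlt_dec (fst q) a); [|discriminate].
        destruct HF' as [A1 [A2 [A3 A4]]]. unfold disjp, disj in HD1; simpl in HD1.
        repeat split; auto. lra. }
      assert (HR : Forall (inside delta (a + l) hi) (filter (fun q => negb (P q)) L)).
      { rewrite Forall_forall in *. intros q Hq. apply filter_In in Hq.
        destruct Hq as [Hq Pq]. specialize (HF' q Hq). specialize (HD1 q Hq).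
        unfold P, ltb_R in Pq. destruct (Rlt_dec (fst q) a); [discriminate|].
        destruct HF' as [A1 [A2 [A3 A4]]]. unfold disjp, disj in HD1; simpl in HD1.
        repeat split; auto. lra. }
      destruct (IH (filter P L) lo a) as [n1 [t1 [P1 [M1 S1]]]]; auto.
      { pose proof (filter_length_le P L). lia. }
      { apply pdisj_filter; auto. }
      destruct (IH (filter (fun q => negb (P q)) L) (a + l) hi) as [n3 [t3 [P3 [M3 S3]]]]; auto.
      { pose proof (filter_length_le (fun q => negb (P q)) L). lia. }
      { apply pdisj_filter; auto. }
      destruct (part_single Phi f delta a l Hl1 Hl2) as [n2 [t2 [P2 [M2 S2]]]].
      destruct (part_concat_ex Phi f delta a (a + l) hi n2 t2 n3 t3 P2 P3 M2 M3)
        as [n4 [t4 [P4 [M4 S4]]]].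
      destruct (part_concat_ex Phi f delta lo a hi n1 t1 n4 t4 P1 P4 M1 M4)
        as [n5 [t5 [P5 [M5 S5]]]].
      exists n5, t5; split; [auto|split; [auto|]].
      simpl. rewrite (lsum_filter gPhi P L). rewrite S5, S4, S2.
      unfold gPhi at 1; simpl. lra.
Qed.

End PL.

Lemma least_nat (P : nat -> Prop) : (exists n, P n) -> exists n, P n /\ forall m, (m < n)%nat -> ~ P m.
Proof.
  intros [n Hn]. revert Hn. pattern n; apply lt_wf_ind; clear n. intros n IH Hn.
  destruct (classic (exists m, (m < n)%nat /\ P m)) as [[m [Hm Pm]]|H].
  - apply (IH m Hm Pm).
  - exists n; split; auto. intros m Hm Pm; apply H; eauto.
Qed.

Lemma sum_mono_N (h : nat -> R) N m : (forall n, 0 <= h n) -> sum_f_R0 h N <= sum_f_R0 h (N + m).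
Proof.
  intros Hh. induction m as [|m IH]. rewrite Nat.add_0_r; lra.
  rewrite Nat.add_succ_r; simpl. specialize (Hh (S (N + m))). lra.
Qed.

Lemma ev2 j : Nat.even (2 * j) = true /\ Nat.div2 (2 * j) = j.
Proof. rewrite Nat.even_mul, Nat.div2_double. auto. Qed.
Lemma od2 j : Nat.even (S (2 * j)) = false /\ Nat.div2 (S (2 * j)) = j.
Proof. rewrite Nat.even_succ, Nat.odd_mul, Nat.div2_succ_double. auto. Qed.

Lemma interleave (a b : nat -> R) N :
  (forall n, 0 <= a n) -> (forall n, 0 <= b n) ->
  sum_f_R0 (fun n => if Nat.even n then a (Nat.div2 n) else b (Nat.div2 n)) N
  <= sum_f_R0 a N + sum_f_R0 b N.
Proof.
  intros Ha Hb. set (h := fun n => if Nat.even n then a (Nat.div2 n) else b (Nat.div2 n)).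
  assert (E : forall M, sum_f_R0 h (S (2 * M)) = sum_f_R0 a M + sum_f_R0 b M).
  { induction M as [|M IH].
    - simpl. unfold h; simpl. lra.
    - replace (S (2 * S M)) with (S (S (S (2 * M)))) by lia.
      change (sum_f_R0 h (S (S (S (2 * M))))) with
        (sum_f_R0 h (S (2 * M)) + h (S (S (2 * M))) + h (S (S (S (2 * M))))).
      rewrite IH. simpl (sum_f_R0 a (S M)). simpl (sum_f_R0 b (S M)).
      unfold h.
      replace (S (S (2 * M))) with (2 * S M)%nat by lia.
      replace (S (2 * S M)) with (S (2 * S M)) by lia.
      destruct (ev2 (S M)) as [-> ->]. destruct (od2 (S M)) as [-> ->]. lra. }
  assert (Hh : forall n, 0 <= h n) by (intros n; unfold h; destruct (Nat.even n); auto).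
  pose proof (sum_mono_N h N (S N) Hh). replace (N + S N)%nat with (S (2 * N)) in H by lia.
  rewrite E in H. exact H.
Qed.

Definition T := ((R * R) * R)%type.

Section Greedy.
Variables (G : R -> R -> Prop) (psi : R -> R) (delta C : R) (EE : R -> Prop).
Hypothesis psi_cont : cont_nonneg psi.
Hypothesis psi_mono : forall s t, 0 <= s -> s < t -> psi s < psi t.
Hypothesis psi0 : psi 0 = 0.
Hypothesis delta_pos : 0 < delta.
Hypothesis HG : forall x h, G x h -> 0 < h <= delta.
Hypothesis HE : forall x, EE x -> forall eta, 0 < eta -> exists h, h < eta /\ G x h.
Hypothesis HC : forall L, Forall (fun q => G (fst q) (snd q)) L -> pdisj L ->
  lsum (fun q => psi (snd q)) L <= C.

Lemma psi_le s t : 0 <= s -> s <= t -> psi s <= psi t.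
Proof. intros H1 H2. destruct (Req_dec s t); [subst; lra|]. left; apply psi_mono; lra. Qed.
Lemma psi_nonneg s : 0 <= s -> 0 <= psi s.
Proof. intros; rewrite <- psi0; apply psi_le; lra. Qed.
Lemma psi_pos s : 0 < s -> 0 < psi s.
Proof. intros; rewrite <- psi0; apply psi_mono; lra. Qed.

Definition availF (F : nat -> option T) (k : nat) (x h : R) : Prop :=
  G x h /\ forall i, (i < k)%nat ->
    match F i with Some p => disj x h (fst (fst p)) (snd (fst p)) | None => True end.

Definition Spec (F : nat -> option T) (k : nat) (p : T) : Prop :=
  availF F k (fst (fst p)) (snd (fst p)) /\
  (forall x h, availF F k x h -> h <= snd p) /\
  psi (snd p) <= 2 * psi (snd (fst p)) /\ snd p <= delta.

Definition choose (F : nat -> option T) (k : nat) : option T :=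
  match excluded_middle_informative (exists p, Spec F k p) with
  | left H => Some (proj1_sig (constructive_indefinite_description _ H))
  | right _ => None end.

Fixpoint st (k : nat) : nat -> option T :=
  match k with
  | O => fun _ => None
  | S k' => fun i => if (i <? k')%nat then st k' i
                     else if (i =? k')%nat then choose (st k') k' else None
  end.

Definition I (i : nat) : option T := st (S i) i.

Lemma I_eq k : I k = choose (st k) k.
Proof. unfold I; simpl. rewrite Nat.ltb_irrefl, Nat.eqb_refl. reflexivity. Qed.

Lemma st_I : forall k i, (i < k)%nat -> st k i = I i.
Proof.
  induction k as [|k IH]; intros i Hi; [lia|]. simpl.
  destruct (i <? k)%nat eqn:E.
  - apply Nat.ltb_lt in E. auto.
  - assert (i = k) by (apply Nat.ltb_ge in E; lia). subst.
    rewrite Nat.eqb_refl. symmetry; apply I_eq.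
Qed.

Lemma avail_ext F F' k x h : (forall i, (i < k)%nat -> F i = F' i) ->
  availF F k x h -> availF F' k x h.
Proof.
  intros HF [H1 H2]; split; auto. intros i Hi. rewrite <- HF by auto. exact (H2 i Hi).
Qed.

Lemma Spec_ext F F' k p : (forall i, (i < k)%nat -> F i = F' i) -> Spec F k p -> Spec F' k p.
Proof.
  intros HF [A [B [D K]]]. split; [|split; [|split]]; auto.
  - eapply avail_ext; eauto.
  - intros x h Hx. apply (B x h). eapply avail_ext; [|exact Hx]. intros; symmetry; auto.
Qed.

Lemma I_spec k p : I k = Some p -> Spec I k p.
Proof.
  rewrite I_eq. unfold choose.
  destruct (excluded_middle_informative _) as [H|H]; [|discriminate].
  intros Hp; inversion Hp; subst.
  destruct (constructive_indefinite_description _ H) as [q Hq]; simpl.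
  eapply Spec_ext; [|eauto]. apply st_I.
Qed.

Lemma spec_exists F k x0 h0 : availF F k x0 h0 -> exists p, Spec F k p.
Proof.
  intros H0.
  set (A := fun h => exists x, availF F k x h).
  assert (Hb : bound A).
  { exists delta. intros h [x [Hg _]]. apply HG in Hg; lra. }
  destruct (completeness A Hb (ex_intro _ h0 (ex_intro _ x0 H0))) as [S [Sub Slub]].
  assert (Hh0 : h0 <= S) by (apply Sub; exists x0; auto).
  assert (Hh0p : 0 < h0) by (destruct H0 as [Hg _]; apply HG in Hg; lra).
  assert (SD : S <= delta).
  { apply Slub. intros h [x [Hg _]]. apply HG in Hg; lra. }
  assert (PS : 0 < psi S) by (apply psi_pos; lra).
  destruct (psi_cont S ltac:(lra) (psi S / 2) ltac:(lra)) as [del [Hdel Hc]].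
  assert (exists h, A h /\ S - del < h).
  { apply NNPP; intro Hn.
    assert (S <= S - del); [|lra].
    apply Slub. intros h Ah. apply Rnot_lt_le. intro Hlt. apply Hn; eauto. }
  destruct H as [h [[x Hx] Hlt]].
  assert (hS : h <= S) by (apply Sub; exists x; auto).
  assert (hp : 0 < h) by (destruct Hx as [Hg _]; apply HG in Hg; lra).
  exists ((x, h), S). split; [|split; [|split]]; simpl; auto.
  - intros y h' Hy. apply Sub. exists y; auto.
  - assert (Rabs (psi h - psi S) < psi S / 2).
    { apply Hc; [lra|]. rewrite Rabs_left1; lra. }
    rewrite Rabs_left1 in H; [lra|]. assert (psi h <= psi S) by (apply psi_le; lra). lra.
Qed.

Lemma I_some k x h : availF I k x h -> exists p, I k = Some p.
Proof.
  intros H. assert (H' : availF (st k) k x h).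
  { eapply avail_ext; [|eauto]. intros; symmetry; apply st_I; auto. }
  destruct (spec_exists _ _ _ _ H') as [p Hp].
  rewrite I_eq. unfold choose. destruct (excluded_middle_informative _) as [Hx|Hx].
  - eexists; reflexivity.
  - exfalso; eauto.
Qed.

Definition w (j : nat) : R := match I j with Some p => psi (snd (fst p)) | None => 0 end.

Lemma w_nonneg j : 0 <= w j.
Proof.
  unfold w. destruct (I j) as [p|] eqn:E; [|lra].
  apply I_spec in E. destruct E as [[Hg _] _]. apply HG in Hg. apply psi_nonneg; lra.
Qed.

Fixpoint pre (n : nat) : list (R * R) :=
  match n with
  | O => nil
  | S m => match I m with Some p => fst p :: pre m | None => pre m end
  end.

Lemma pre_in n q : In q (pre n) -> exists i p, (i < n)%nat /\ I i = Some p /\ fst p = q.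
Proof.
  induction n as [|n IH]; simpl; [tauto|].
  destruct (I n) as [p|] eqn:E.
  - intros [H|H]. exists n, p; repeat split; auto.
    destruct (IH H) as [i [p' [A B]]]. exists i, p'; split; [lia|auto].
  - intros H. destruct (IH H) as [i [p' [A B]]]. exists i, p'; split; [lia|auto].
Qed.

Lemma pre_G n : Forall (fun q => G (fst q) (snd q)) (pre n).
Proof.
  rewrite Forall_forall. intros q Hq. destruct (pre_in _ _ Hq) as [i [p [_ [Hp <-]]]].
  apply I_spec in Hp. destruct Hp as [[Hg _] _]. auto.
Qed.

Lemma pre_pdisj n : pdisj (pre n).
Proof.
  induction n as [|n IH]; simpl; auto.
  destruct (I n) as [p|] eqn:E; simpl; auto. split; auto.
  rewrite Forall_forall. intros q Hq. destruct (pre_in _ _ Hq) as [i [p' [Hi [Hp' <-]]]].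
  apply I_spec in E. destruct E as [[_ Hd] _]. specialize (Hd i Hi). rewrite Hp' in Hd.
  unfold disjp. exact Hd.
Qed.

Lemma lsum_pre N : lsum (fun q => psi (snd q)) (pre (S N)) = sum_f_R0 w N.
Proof.
  induction N as [|N IH].
  - simpl. unfold w. destruct (I 0%nat); simpl; lra.
  - change (pre (S (S N))) with
      (match I (S N) with Some p => fst p :: pre (S N) | None => pre (S N) end).
    simpl (sum_f_R0 w (S N)). rewrite <- IH. unfold w.
    destruct (I (S N)); simpl; lra.
Qed.

Lemma Pn_le N : sum_f_R0 w N <= C.
Proof. rewrite <- lsum_pre. apply HC; [apply pre_G|apply pre_pdisj]. Qed.

Lemma gap (F : nat -> option T) k x : (forall i, (i < k)%nat -> match F i with
     Some p => ~ (fst (fst p) <= x <= fst (fst p) + snd (fst p)) | None => True end) ->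
  exists eta, 0 < eta /\ forall h, 0 < h < eta -> forall i, (i < k)%nat ->
    match F i with Some p => disj x h (fst (fst p)) (snd (fst p)) | None => True end.
Proof.
  induction k as [|k IH]; intros H.
  - exists 1; split; [lra|]. intros; lia.
  - destruct IH as [eta [He Hk]]. { intros; apply H; lia. }
    specialize (H k (Nat.lt_succ_diag_r k)).
    destruct (F k) as [p|] eqn:Ek.
    + destruct (Rlt_dec x (fst (fst p))) as [Hlt|Hge].
      * exists (Rmin eta (fst (fst p) - x)); split.
        { apply Rmin_pos; lra. }
        intros h Hh i Hi. destruct (Nat.eq_dec i k) as [->|Hne].
        -- rewrite Ek. left. pose proof (Rmin_r eta (fst (fst p) - x)). lra.
        -- apply Hk; [|lia]. pose proof (Rmin_l eta (fst (fst p) - x)). lra.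
      * exists eta; split; auto. intros h Hh i Hi. destruct (Nat.eq_dec i k) as [->|Hne].
        -- rewrite Ek. right. lra.
        -- apply Hk; [auto|lia].
    + exists eta; split; auto. intros h Hh i Hi. destruct (Nat.eq_dec i k) as [->|Hne].
      * rewrite Ek; auto.
      * apply Hk; [auto|lia].
Qed.

Theorem greedy_cover eps : 0 < eps ->
  exists (U : nat -> R -> Prop) (d : nat -> R),
      (forall n, 0 <= d n <= delta) /\
      (forall n x y, U n x -> U n y -> Rabs (x - y) <= d n) /\
      (forall x, EE x -> exists n, U n x) /\
      (forall N, sum_f_R0 (fun n => psi (d n)) N <= C + eps).
Proof.
  intros Heps.
  set (PS := fun r => exists N, r = sum_f_R0 w N).
  assert (HPb : bound PS) by (exists C; intros r [N ->]; apply Pn_le).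
  destruct (completeness PS HPb (ex_intro _ _ (ex_intro _ 0%nat eq_refl))) as [Pst [Pub Plub]].
  assert (Pup : forall N, sum_f_R0 w N <= Pst) by (intros N; apply Pub; exists N; auto).
  assert (Pclose : forall eta, 0 < eta -> exists k, Pst - sum_f_R0 w k < eta).
  { intros eta He. apply NNPP; intro Hn.
    assert (Pst <= Pst - eta); [|lra]. apply Plub. intros r [N ->].
    apply Rnot_lt_le; intro Hl. apply Hn. exists N. lra. }
  assert (Pmono : forall a b, (a <= b)%nat -> sum_f_R0 w a <= sum_f_R0 w b).
  { intros a b Hab. replace b with (a + (b - a))%nat by lia. apply sum_mono_N, w_nonneg. }
  destruct (Pclose (eps / 2) ltac:(lra)) as [k0 Hk0].
  set (du := fun j => match I j with Some p => snd (fst p) | None => 0 end).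
  set (uu := fun j y => match I j with Some p => fst (fst p) <= y <= fst (fst p) + snd (fst p)
                         | None => False end).
  set (dv := fun j => if (k0 <? j)%nat then match I j with Some p => snd p | None => 0 end else 0).
  set (vv := fun j y => if (k0 <? j)%nat then
              match I j with Some p => fst (fst p) - snd p <= y <= fst (fst p) | None => False end
             else False).
  exists (fun n => if Nat.even n then uu (Nat.div2 n) else vv (Nat.div2 n)).
  exists (fun n => if Nat.even n then du (Nat.div2 n) else dv (Nat.div2 n)).
  assert (SpecI : forall j p, I j = Some p ->
     0 < snd (fst p) <= delta /\ snd (fst p) <= snd p /\ snd p <= delta /\
     psi (snd p) <= 2 * psi (snd (fst p))).
  { intros j p Hp. apply I_spec in Hp. destruct Hp as [Ha [Hb [Hc Hd]]].
    pose proof (Hb _ _ Ha). destruct Ha as [Hg _]. apply HG in Hg. repeat split; lra. }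
  split; [|split; [|split]].
  - intros n. destruct (Nat.even n).
    + unfold du. destruct (I (Nat.div2 n)) as [p|] eqn:Ep; [|lra].
      apply SpecI in Ep. lra.
    + unfold dv. destruct (k0 <? Nat.div2 n)%nat; [|lra].
      destruct (I (Nat.div2 n)) as [p|] eqn:Ep; [|lra]. apply SpecI in Ep. lra.
  - intros n x y. destruct (Nat.even n).
    + unfold uu, du. destruct (I (Nat.div2 n)) as [p|]; [|tauto].
      intros Hx Hy. apply Rabs_le. lra.
    + unfold vv, dv. destruct (k0 <? Nat.div2 n)%nat; [|tauto].
      destruct (I (Nat.div2 n)) as [p|]; [|tauto].
      intros Hx Hy. apply Rabs_le. lra.
  - intros x Ex.
    assert (Heven : forall j, Nat.even (2 * j) = true /\ Nat.div2 (2 * j) = j).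
    { intros j. rewrite Nat.even_mul, Nat.div2_double. auto. }
    assert (Hodd : forall j, Nat.even (S (2 * j)) = false /\ Nat.div2 (S (2 * j)) = j).
    { intros j. rewrite Nat.even_succ, Nat.odd_mul, Nat.div2_succ_double. auto. }
    destruct (classic (exists i, (i < S k0)%nat /\ exists p, I i = Some p /\
               fst (fst p) <= x <= fst (fst p) + snd (fst p))) as
      [[i [_ [p [Hp Hx]]]] | Hno].
    { exists (2 * i)%nat. destruct (Heven i) as [-> ->]. unfold uu. rewrite Hp. auto. }
    destruct (gap I (S k0) x) as [eta [Heta Hgap]].
    { intros i Hi. destruct (I i) as [p|] eqn:Ep; auto. intro Hx. apply Hno. eauto. }
    destruct (HE x Ex eta Heta) as [h [Hh Gh]].
    assert (hp : 0 < h) by (apply HG in Gh; lra).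
    assert (Av0 : availF I (S k0) x h) by (split; auto; apply Hgap; lra).
    set (P := fun j => (S k0 <= j)%nat /\ exists p, I j = Some p /\
                       ~ disj x h (fst (fst p)) (snd (fst p))).
    assert (Avj : forall j, (S k0 <= j)%nat -> (forall m, (m < j)%nat -> ~ P m) -> availF I j x h).
    { intros j Hj Hm. split; auto. intros i Hi. destruct (le_lt_dec (S k0) i) as [Hle|Hlt].
      - destruct (I i) as [p|] eqn:Ep; auto. apply NNPP; intro Hn. apply (Hm i Hi).
        split; auto. exists p; auto.
      - apply (proj2 Av0); auto. }
    assert (Pex : exists j, P j).
    { apply NNPP; intro Hn.
      assert (Hall : forall j, (S k0 <= j)%nat -> psi h <= 2 * w j).
      { intros j Hj. assert (Aj : availF I j x h).
        { apply Avj; auto. intros m _ Pm; apply Hn; eauto. }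
        destruct (I_some _ _ _ Aj) as [p Hp].
        pose proof (I_spec _ _ Hp) as [_ [Hb [Hc _]]].
        pose proof (Hb _ _ Aj). unfold w; rewrite Hp.
        assert (psi h <= psi (snd p)) by (apply psi_le; lra). lra. }
      assert (ph : 0 < psi h) by (apply psi_pos; auto).
      destruct (Pclose (psi h / 2) ltac:(lra)) as [k1 Hk1].
      set (j := S (Nat.max k1 k0)).
      specialize (Hall j ltac:(unfold j; lia)).
      assert (w j = sum_f_R0 w j - sum_f_R0 w (Nat.max k1 k0)) by (unfold j; simpl; lra).
      pose proof (Pup j). pose proof (Pmono k1 (Nat.max k1 k0) ltac:(lia)). lra. }
    destruct (least_nat P Pex) as [j [[Hj [p [Hp Hnd]]] Hmin]].
    pose proof (I_spec _ _ Hp) as [_ [Hb _]].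
    pose proof (Hb _ _ (Avj j Hj Hmin)) as hS.
    unfold disj in Hnd.
    destruct (Rle_dec (fst (fst p)) x) as [Hax|Hax].
    + exists (2 * j)%nat. destruct (Heven j) as [-> ->]. unfold uu. rewrite Hp. lra.
    + exists (S (2 * j)). destruct (Hodd j) as [-> ->]. unfold vv.
      assert (E1 : (k0 <? j)%nat = true) by (apply Nat.ltb_lt; lia). rewrite E1, Hp. lra.
  - intros N.
    set (a := fun j => psi (du j)). set (b := fun j => psi (dv j)).
    assert (Ha : forall j, a j = w j).
    { intros j; unfold a, du, w. destruct (I j); auto. }
    assert (Hb0 : forall j, (j <= k0)%nat -> b j = 0).
    { intros j Hj. unfold b, dv. assert (E1 : (k0 <? j)%nat = false) by (apply Nat.ltb_ge; lia).
      rewrite E1. auto. }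
    assert (Hb1 : forall j, (k0 < j)%nat -> b j <= 2 * w j).
    { intros j Hj. unfold b, dv, w. assert (E1 : (k0 <? j)%nat = true) by (apply Nat.ltb_lt; lia).
      rewrite E1. destruct (I j) as [p|] eqn:Ep; [|lra]. apply SpecI in Ep. lra. }
    assert (Hbn : forall j, 0 <= b j).
    { intros j. unfold b. apply psi_nonneg. unfold dv.
      destruct (k0 <? j)%nat; [|lra]. destruct (I j) as [p|] eqn:Ep; [|lra].
      apply SpecI in Ep; lra. }
    assert (Sb : sum_f_R0 b N <= 2 * (Pst - sum_f_R0 w k0)).
    { assert (Pk : sum_f_R0 w k0 <= Pst) by apply Pup.
      destruct (le_lt_dec N k0) as [HN|HN].
      - rewrite sum_eq_R0; [lra|]. intros n Hn; apply Hb0; lia.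
      - assert (forall m, sum_f_R0 b (k0 + m) <= 2 * (sum_f_R0 w (k0 + m) - sum_f_R0 w k0)).
        { induction m as [|m IH].
          - rewrite Nat.add_0_r, sum_eq_R0; [lra|]. intros n Hn; apply Hb0; lia.
          - rewrite Nat.add_succ_r. simpl. specialize (Hb1 (S (k0 + m)) ltac:(lia)). lra. }
        replace N with (k0 + (N - k0))%nat by lia.
        specialize (H (N - k0)%nat). pose proof (Pup (k0 + (N - k0))%nat). lra. }
    eapply Rle_trans.
    + apply Req_le. apply sum_eq. intros i _.
      instantiate (1 := fun n => if Nat.even n then a (Nat.div2 n) else b (Nat.div2 n)).
      simpl. destruct (Nat.even i); reflexivity.
    + eapply Rle_trans; [apply interleave|].
      * intros n; rewrite Ha; apply w_nonneg.
      * auto.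
      * rewrite (sum_eq a w N) by auto. pose proof (Pn_le N). lra.
Qed.

End Greedy.

Lemma mono_le (g : R -> R) : (forall s t, 0 <= s -> s < t -> g s < g t) ->
  forall s t, 0 <= s -> s <= t -> g s <= g t.
Proof. intros Hg s t H1 H2. destruct (Req_dec s t); [subst; lra|]. left; apply Hg; lra. Qed.

Theorem lemma3p2 (phi psi phi_inv f : R -> R) :
  admissible phi -> admissible psi ->
  (forall y, 0 <= y -> 0 <= phi_inv y /\ phi (phi_inv y) = y) ->
  measurable_on01 f ->
  forall c : R,
    Vstar_le (fun y => psi (phi_inv y)) f c ->
    H_le psi (fun x => 0 <= x <= 1 /\ limsup_gt1 phi f x) c.
Proof.
  intros [_ [phim [phi0 _]]] [psic [psim [psi0 _]]] Hinv _ c Hv.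
  intros delta eps Hd He.
  destruct (Hv (eps / 2) ltac:(lra)) as [d1 [Hd1 Hpart]].
  set (dl := Rmin delta d1).
  assert (dlp : 0 < dl) by (apply Rmin_pos; lra).
  assert (dl1 : dl <= delta) by apply Rmin_l.
  assert (dl2 : dl <= d1) by apply Rmin_r.
  set (G := fun x h => 0 <= x /\ 0 < h <= dl /\ x + h <= 1 /\ phi h < Rabs (f (x + h) - f x)).
  set (Phi := fun y => psi (phi_inv y)).
  assert (Phin : forall y, 0 <= y -> 0 <= Phi y).
  { intros y Hy. unfold Phi. rewrite <- psi0. apply mono_le; auto; [lra|]. apply Hinv; auto. }
  destruct (greedy_cover G psi dl (c + eps / 2)
     (fun x => 0 <= x <= 1 /\ limsup_gt1 phi f x) psic psim psi0 dlp) with (eps := eps / 2)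
     as [U [d [D1 [D2 [D3 D4]]]]].
  - intros x h [_ [Hh _]]; exact Hh.
  - intros x [[Hx0 Hx1] [c0 [Hc0 Hl]]] eta Heta.
    destruct (Hl (Rmin eta dl) ltac:(apply Rmin_pos; lra)) as [h [[Hh1 Hh2] [Hh3 Hh4]]].
    pose proof (Rmin_l eta dl). pose proof (Rmin_r eta dl).
    exists h; split; [lra|]. unfold G; repeat split; try lra.
    assert (pp : 0 < phi h) by (rewrite <- phi0; apply phim; lra).
    apply (Rmult_lt_compat_r (phi h)) in Hh4; auto.
    unfold Rdiv in Hh4. rewrite Rmult_assoc, Rinv_l in Hh4 by lra. nra.
  - intros L HL HD.
    assert (HF : Forall (inside dl 0 1) L).
    { rewrite Forall_forall in *. intros q Hq. destruct (HL q Hq) as [A [B [C' _]]].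
      unfold inside; lra. }
    destruct (part_list_aux Phi f dl Phin dlp (length L) L 0 1 (Nat.le_refl _) ltac:(lra) HF HD)
      as [n [t [[P0 [P1 P2]] [M S]]]].
    assert (Hn : (0 < n)%nat).
    { destruct n; [|lia]. rewrite P0 in P1; lra. }
    assert (Hvt : v_Phi Phi f n t <= c + eps / 2).
    { apply Hpart. repeat split; auto. intros i Hi; specialize (M i Hi); lra. }
    eapply Rle_trans; [|exact Hvt]. eapply Rle_trans; [|exact S].
    apply lsum_le. rewrite Forall_forall in *. intros q Hq.
    destruct (HL q Hq) as [A [B [C' Dq]]]. unfold gPhi, Phi.
    set (y := Rabs (f (fst q + snd q) - f (fst q))) in *.
    assert (y0 : 0 <= y) by apply Rabs_pos.
    destruct (Hinv y y0) as [Hz1 Hz2].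
    apply mono_le; auto; [lra|].
    apply Rnot_lt_le; intro Hlt. assert (phi (phi_inv y) < phi (snd q)) by (apply phim; auto).
    lra.
  - lra.
  - exists U, d. split; [|split; [|split]]; auto.
    + intros n; specialize (D1 n); lra.
    + intros N; specialize (D4 N); lra.
Qed.
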